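(* Let $N,M$ be positive integers, let $\mathscr{A}\subset\mathscr{M}(N,M)$ and $\mathscr{B}\subset\mathscr{M}(M,N)$ be finite sets of real matrices, and let $\|\cdot\|$ be a submultiplicative norm on $\mathscr{M}(N,N)$. Suppose that for every sequence $\{A_n\}_{n\ge1}$ with $A_n\in\mathscr{A}$ there exist a positive integer $k$ and matrices $B_1,\ldots,B_k\in\mathscr{B}$ such that $\|A_kB_k\cdots A_1B_1\|<1$. Then there exist constants $C>0$ and $\lambda\in(0,1)$ such that for every sequence $\{A_n\in\mathscr{A}\}$ there is a sequence $\{B_n\in\mathscr{B}\}$ for which \[ \|A_nB_n\cdots A_1B_1\|\le C\lambda^n,\qquad n=1,2,\ldots. \]
   Context: $\mathscr{M}(p,q)$ denotes the space of $p\times q$ real matrices with the topology of elementwise convergence. A norm on $\mathscr{M}(N,N)$ is submultiplicative if $\|XY\|\le\|X\|\,\|Y\|$ for all $X,Y$. *)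

(* Defs.v *)
From mathcomp Require Import all_boot all_order all_algebra.
From mathcomp Require Import reals.
Set Implicit Arguments. Unset Strict Implicit. Unset Printing Implicit Defensive.
Import Order.TTheory GRing.Theory Num.Theory.
Local Open Scope ring_scope.

Definition submult_norm (R : realType) (N : nat) (nrm : 'M[R]_N -> R) : Prop :=
  [/\ (forall X, nrm X = 0 -> X = 0),
      (forall (a : R) X, nrm (a *: X) = `|a| * nrm X),
      (forall X Y, nrm (X + Y) <= nrm X + nrm Y)
    & (forall X Y, nrm (X *m Y) <= nrm X * nrm Y)].

(* prodAB A B k = A_k B_k ... A_1 B_1 (sequences indexed from 1; k = 0 gives 1). *)
Fixpoint prodAB (R : realType) (N M : nat)
    (A : nat -> 'M[R]_(N, M)) (B : nat -> 'M[R]_(M, N)) (k : nat) : 'M[R]_N :=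
  match k with
  | 0 => 1%:M
  | k'.+1 => (A k'.+1 *m B k'.+1) *m prodAB A B k'
  end.

(* Main.v *)
Require Import Defs.
From mathcomp Require Import all_boot all_order all_algebra.
From mathcomp Require Import reals ring lra zify.
From Stdlib Require Import ClassicalEpsilon Classical.
Import Order.TTheory GRing.Theory Num.Theory.
Set Implicit Arguments. Unset Strict Implicit.
Local Open Scope ring_scope.

Lemma prodAB_eq (R : realType) (N M : nat) (A A' : nat -> 'M[R]_(N, M))
  (B B' : nat -> 'M[R]_(M, N)) k :
  (forall i, (0 < i <= k)%N -> A i = A' i /\ B i = B' i) ->
  prodAB A B k = prodAB A' B' k.
Proof.
elim: k => [//|k IH] H /=.
have [-> ->] := H k.+1 (ltac:(lia)).
rewrite IH // => i /andP[h1 h2]; apply: H; rewrite h1 /=; lia.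
Qed.

Definition goodAt (R : realType) (N M : nat) (sB : seq 'M[R]_(M, N))
  (nrm : 'M[R]_N -> R) (A : nat -> 'M[R]_(N, M)) k :=
  exists B : nat -> 'M[R]_(M, N),
    (forall i, (0 < i <= k)%N -> B i \in sB) /\ nrm (prodAB A B k) < 1.

Definition Ext (R : realType) (N M : nat) (sA : seq 'M[R]_(N, M))
  (sB : seq 'M[R]_(M, N)) (nrm : 'M[R]_N -> R) (A : nat -> 'M[R]_(N, M)) n :=
  forall m, exists A' : nat -> 'M[R]_(N, M),
    (forall i, (0 < i <= n)%N -> A' i = A i) /\
    (forall i, (0 < i <= n + m)%N -> A' i \in sA) /\
    (forall k, (0 < k <= n + m)%N -> ~ goodAt sB nrm A' k).

Definition upd (T : Type) (A : nat -> T) n (a : T) :=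
  fun i => if i == n then a else A i.

Lemma goodAt_eq (R : realType) (N M : nat) (sB : seq 'M[R]_(M, N))
  (nrm : 'M[R]_N -> R) (A A' : nat -> 'M[R]_(N, M)) k :
  (forall i, (0 < i <= k)%N -> A i = A' i) -> goodAt sB nrm A k -> goodAt sB nrm A' k.
Proof.
move=> H [B [hB hn]]; exists B; split => //.
rewrite -(@prodAB_eq _ _ _ A A' B B) // => i hi; split => //; exact: H.
Qed.

Lemma Ext_step (R : realType) (N M : nat) (sA : seq 'M[R]_(N, M))
  (sB : seq 'M[R]_(M, N)) (nrm : 'M[R]_N -> R) (A : nat -> 'M[R]_(N, M)) n :
  Ext sA sB nrm A n -> exists a, a \in sA /\ Ext sA sB nrm (upd A n.+1 a) n.+1.
Proof.
move=> HE; apply: NNPP => Hn.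
pose P a m := ~ exists A' : nat -> 'M[R]_(N, M),
    (forall i, (0 < i <= n.+1)%N -> A' i = upd A n.+1 a i) /\
    (forall i, (0 < i <= n.+1 + m)%N -> A' i \in sA) /\
    (forall k, (0 < k <= n.+1 + m)%N -> ~ goodAt sB nrm A' k).
have Pmono : forall a m m', (m <= m')%N -> P a m -> P a m'.
  move=> a m m' hm hP [A' [h1 [h2 h3]]]; apply: hP; exists A'; split => //; split.
    move=> i hi; apply: h2; lia.
  move=> k hk; apply: h3; lia.
have Pex : forall a, a \in sA -> exists m, P a m.
  move=> a ha; apply: NNPP => H1; apply: Hn; exists a; split => // m.
  apply: NNPP => H2; apply: H1; exists m; exact: H2.
have Hl : forall l : seq 'M[R]_(N, M), {subset l <= sA} -> exists m, forall a, a \in l -> P a m.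
  elim => [|a l IH] hl; first by exists 0%N.
  have [m1 hm1] := Pex a (hl a (mem_head _ _)).
  have [m2 hm2] : exists m, forall a, a \in l -> P a m.
    by apply: IH => x hx; apply: hl; rewrite inE hx orbT.
  exists (maxn m1 m2) => b; rewrite inE => /orP[/eqP->|hb].
    by apply: (Pmono _ m1) => //; apply: leq_maxl.
  by apply: (Pmono _ m2); [apply: leq_maxr| apply: hm2].
have [m hm] := Hl sA (fun x hx => hx).
have [A' [h1 [h2 h3]]] := HE m.+1.
have ha : A' n.+1 \in sA by apply: h2; lia.
apply: (hm _ ha); exists A'; split; last split.
- move=> i hi; rewrite /upd; case: eqP => [->//|ne]; apply: h1; lia.
- move=> i hi; apply: h2; lia.
- move=> k hk; apply: h3; lia.
Qed.

Lemma konig (R : realType) (N M : nat)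
  (sA : seq 'M[R]_(N, M)) (sB : seq 'M[R]_(M, N)) (nrm : 'M[R]_N -> R)
  (hyp : forall A : nat -> 'M[R]_(N, M), (forall n, (0 < n)%N -> A n \in sA) ->
     exists k : nat, (0 < k)%N /\
       exists B : nat -> 'M[R]_(M, N),
         (forall i, (0 < i <= k)%N -> B i \in sB) /\ nrm (prodAB A B k) < 1) :
  exists K, forall A : nat -> 'M[R]_(N, M), (forall n, (0 < n)%N -> A n \in sA) ->
    exists k, (0 < k <= K)%N /\ goodAt sB nrm A k.
Proof.
apply: NNPP => H.
have HK : forall K, exists A : nat -> 'M[R]_(N, M), (forall n, (0 < n)%N -> A n \in sA) /\
   forall k, (0 < k <= K)%N -> ~ goodAt sB nrm A k.
  move=> K; apply: NNPP => H2; apply: H; exists K => A hA; apply: NNPP => H3.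
  apply: H2; exists A; split => // k hk hg; apply: H3; exists k; split => //.
have E0 : forall A, Ext sA sB nrm A 0.
  move=> A m; have [A' [h1 h2]] := HK m; exists A'; split; first lia.
  split => // i hi; apply: h1; lia.
pose stp (A : nat -> 'M[R]_(N, M)) n := epsilon (inhabits 0)
   (fun a => a \in sA /\ Ext sA sB nrm (upd A n.+1 a) n.+1).
pose F := fix F (n : nat) : nat -> 'M[R]_(N, M) :=
  match n with 0 => fun _ => 0 | n'.+1 => upd (F n') n'.+1 (stp (F n') n') end.
have FS : forall n, F n.+1 = upd (F n) n.+1 (stp (F n) n) by [].
have FE : forall n, Ext sA sB nrm (F n) n /\ stp (F n) n \in sA /\
                   Ext sA sB nrm (F n.+1) n.+1.
  elim => [|n [_ [_ IH]]].
    have := epsilon_spec (inhabits 0)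
      (fun a => a \in sA /\ Ext sA sB nrm (upd (F 0%N) 1 a) 1) (Ext_step (E0 _)).
    by move=> [h1 h2]; split => //; split.
  have := epsilon_spec (inhabits 0)
      (fun a => a \in sA /\ Ext sA sB nrm (upd (F n.+1) n.+2 a) n.+2) (Ext_step IH).
  by move=> [h1 h2]; split => //; split.
have Fag : forall n i, (0 < i <= n)%N -> F n i = F i i.
  elim => [|n IH] i hi; first lia.
  rewrite FS /upd; case: eqP => [->|ne]; first by rewrite FS /upd eqxx.
  apply: IH; lia.
pose As i := F i i.
have hAs : forall n, (0 < n)%N -> As n \in sA.
  case => [//|n] _; rewrite /As FS /upd eqxx; by have [_ [h _]] := FE n.
have [k [hk [B [hB hn]]]] := hyp As hAs.
have [A' [h1 [_ h3]]] := (proj1 (FE k)) 0%N.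
apply: (h3 k); first lia.
apply: (@goodAt_eq _ _ _ _ _ As); last by exists B.
move=> i hi; rewrite h1 // Fag //.
Qed.

Fixpoint prods (R : realType) (N M : nat) (sA : seq 'M[R]_(N, M))
  (sB : seq 'M[R]_(M, N)) k : seq 'M[R]_N :=
  if k is k'.+1 then
    [seq x *m p | x <- [seq a *m b | a <- sA, b <- sB], p <- prods sA sB k']
  else [:: 1%:M].

Lemma prods_mem (R : realType) (N M : nat) (sA : seq 'M[R]_(N, M))
  (sB : seq 'M[R]_(M, N)) A B k :
  (forall i, (0 < i <= k)%N -> A i \in sA /\ B i \in sB) ->
  prodAB A B k \in prods sA sB k.
Proof.
elim: k => [|k IH] H /=; first by rewrite mem_seq1.
have [ha hb] := H k.+1 (ltac:(lia)).
apply: allpairs_f; first exact: allpairs_f.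
apply: IH => i hi; apply: H; lia.
Qed.

Fixpoint allp (R : realType) (N M : nat) (sA : seq 'M[R]_(N, M))
  (sB : seq 'M[R]_(M, N)) K : seq 'M[R]_N :=
  if K is K'.+1 then prods sA sB K ++ allp sA sB K' else prods sA sB 0.

Lemma allp_mem (R : realType) (N M : nat) (sA : seq 'M[R]_(N, M))
  (sB : seq 'M[R]_(M, N)) k K p :
  (k <= K)%N -> p \in prods sA sB k -> p \in allp sA sB K.
Proof.
elim: K => [|K IH] hk hp /=.
  by move: hp; have -> : k = 0%N by lia.
rewrite mem_cat; case: (ltnP k K.+1) => h.
  by apply/orP; right; apply: IH => //; lia.
have e : k = K.+1 by lia.
by move: hp; rewrite e => ->.
Qed.

Lemma ex_max (R : realType) (s : seq R) :
  exists Mx, 0 < Mx /\ forall x, x \in s -> x <= Mx.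
Proof.
elim: s => [|y s [Mx [h0 h]]]; first by exists 1.
case: (boolP (y <= Mx)) => hy.
  exists Mx; split => // x; rewrite inE => /orP[/eqP->//|]; exact: h.
rewrite -ltNge in hy.
exists y; split; first lra.
move=> x; rewrite inE => /orP[/eqP->//|/h]; lra.
Qed.

Lemma ex_q (R : realType) (s : seq R) :
  exists q, 0 <= q /\ q < 1 /\ forall x, x \in s -> x < 1 -> x <= q.
Proof.
elim: s => [|y s [q [h0 [h1 h]]]]; first by exists 0.
case: (boolP (y < 1)) => hy1; last first.
  exists q; split => //; split => // x; rewrite inE => /orP[/eqP->|/h//].
  by move=> hy; rewrite hy in hy1.
case: (boolP (y <= q)) => hy.
  exists q; split => //; split => // x; rewrite inE => /orP[/eqP->//|]; exact: h.
rewrite -ltNge in hy.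
exists y; split; first lra; split => //.
move=> x; rewrite inE => /orP[/eqP->//|/h hx /hx]; lra.
Qed.

Lemma nrm_ge0 (R : realType) (N : nat) (nrm : 'M[R]_N -> R)
  (hnrm : submult_norm nrm) X : 0 <= nrm X.
Proof.
case: hnrm => _ hZ hD _.
have h1 := hD X ((-1) *: X).
rewrite hZ normrN normr1 mul1r scaleN1r subrr in h1.
have h0 : nrm 0 = 0.
  by have := hZ 0 X; rewrite scale0r normr0 mul0r.
rewrite h0 in h1; lra.
Qed.

Lemma bernoulli (R : realType) (x : R) m :
  0 <= x <= 1 -> 1 - m%:R * x <= (1 - x) ^+ m.
Proof.
move=> /andP[h0 h1]; elim: m => [|m IH]; first by rewrite expr0 mul0r subr0.
rewrite exprSr -natr1.
have h2 : (1 - m%:R * x) * (1 - x) <= (1 - x) ^+ m * (1 - x).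
  by apply: ler_wpM2r => //; lra.
have h3 : 0 <= m%:R :> R by [].
nra.
Qed.

Definition shiftf (T : Type) (m : nat) (f : nat -> T) := fun i => f (m + i)%N.

Lemma prodAB_split (R : realType) (N M : nat) (A : nat -> 'M[R]_(N, M))
  (B : nat -> 'M[R]_(M, N)) m k :
  prodAB A B (m + k) = prodAB (shiftf m A) (shiftf m B) k *m prodAB A B m.
Proof.
elim: k => [|k IH]; first by rewrite addn0 /= mul1mx.
by rewrite addnS /= IH mulmxA /shiftf addnS.
Qed.

Lemma unif (R : realType) (N M : nat)
  (sA : seq 'M[R]_(N, M)) (sB : seq 'M[R]_(M, N)) (nrm : 'M[R]_N -> R)
  (hyp : forall A : nat -> 'M[R]_(N, M), (forall n, (0 < n)%N -> A n \in sA) ->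
     exists k : nat, (0 < k)%N /\
       exists B : nat -> 'M[R]_(M, N),
         (forall i, (0 < i <= k)%N -> B i \in sB) /\ nrm (prodAB A B k) < 1) :
  exists K, (0 < K)%N /\ exists q Mx, 0 <= q /\ q < 1 /\ 0 < Mx /\
   (forall A : nat -> 'M[R]_(N, M), (forall n, (0 < n)%N -> A n \in sA) ->
      exists k (B : nat -> 'M[R]_(M, N)), (0 < k <= K)%N /\
        (forall i, (0 < i <= k)%N -> B i \in sB) /\ nrm (prodAB A B k) <= q) /\
   (forall A B k, (k <= K)%N ->
      (forall i, (0 < i <= k)%N -> A i \in sA /\ B i \in sB) ->
      nrm (prodAB A B k) <= Mx).
Proof.
have [K0 HK] := konig hyp.
exists K0.+1; split => //.
have [q [q0 [q1 hq]]] := ex_q [seq nrm p | p <- allp sA sB K0.+1].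
have [Mx [Mx0 hMx]] := ex_max [seq nrm p | p <- allp sA sB K0.+1].
exists q, Mx; split => //; split => //; split => //; split.
  move=> A hA; have [k [hk [B [hB hn]]]] := HK A hA.
  exists k, B; split; first lia; split => //.
  apply: hq => //; apply: map_f; apply: (@allp_mem _ _ _ _ _ k); first lia.
  by apply: prods_mem => i hi; split; [apply: hA; lia| apply: hB].
move=> A B k hk H; apply: hMx; apply: map_f; apply: (@allp_mem _ _ _ _ _ k) => //.
exact: prods_mem.
Qed.

Definition stepst (X Y : Type) (A : nat -> X) (ch : (nat -> X) -> nat * (nat -> Y))
  (s : nat * (nat -> Y)) : nat * (nat -> Y) :=
  ((s.1 + (ch (shiftf s.1 A)).1)%N,
   fun i => if (i <= s.1)%N then s.2 i else (ch (shiftf s.1 A)).2 (i - s.1)%N).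


Lemma comb (Y : Type) (K : nat) (t : nat -> nat) (Bf : nat -> nat -> Y)
  (c : nat -> nat * (nat -> Y)) :
  t 0%N = 0%N -> (forall j, t j.+1 = (t j + (c j).1)%N) ->
  (forall j i, Bf j.+1 i = if (i <= t j)%N then Bf j i else (c j).2 (i - t j)%N) ->
  (forall j, (0 < (c j).1 <= K)%N) ->
  [/\ (forall j, (t j <= j * K)%N),
      (forall j i, (i <= t j)%N -> Bf i i = Bf j i) &
      (forall n, (0 < n)%N -> exists j, (t j < n <= t j.+1)%N)].
Proof.
move=> t0 tS BfS cK.
have tS1 : forall j, (t j < t j.+1 <= t j + K)%N.
  by move=> j; rewrite tS; have := cK j; lia.
have tmono : forall j d, (t j <= t (j + d))%N.
  move=> j; elim => [|d IH]; first by rewrite addn0.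
  rewrite addnS; have := tS1 (j + d)%N; lia.
have tge : forall j, (j <= t j)%N.
  elim => [|j IH] //; have := tS1 j; lia.
have agree : forall j d i, (i <= t j)%N -> Bf (j + d)%N i = Bf j i.
  move=> j; elim => [|d IH] i hi; first by rewrite addn0.
  rewrite addnS BfS; have := tmono j d; case: ifP => h; first by rewrite IH.
  lia.
split.
- elim => [|j IH]; first by rewrite t0.
  have := tS1 j; rewrite mulSn; lia.
- move=> j i hi; case: (leqP i j) => h.
    have -> : j = (i + (j - i))%N by lia.
    by rewrite agree // tge.
  have -> : i = (j + (i - j))%N by lia.
  rewrite agree //; lia.
- elim => [//|n IH] _; case: (posnP n) => hn.
    exists 0%N; rewrite hn t0; have := tS1 0%N; lia.
  have [j hj] := IH hn.
  case: (leqP n.+1 (t j.+1)) => h.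
    exists j; lia.
  exists j.+1; have := tS1 j.+1; lia.
Qed.

Lemma nat_F (a i : nat) : (0 < i)%N -> (a + i <= a)%N = false.
Proof. lia. Qed.
Lemma nat_sub (a b n : nat) : (a < n <= a + b)%N -> (0 < n - a <= b)%N.
Proof. lia. Qed.

Theorem theorem3 (R : realType) (N M : nat) (hN : (0 < N)%N) (hM : (0 < M)%N)
  (sA : seq 'M[R]_(N, M)) (sB : seq 'M[R]_(M, N)) (nrm : 'M[R]_N -> R)
  (hnrm : submult_norm nrm)
  (hyp : forall A : nat -> 'M[R]_(N, M), (forall n, (0 < n)%N -> A n \in sA) ->
     exists k : nat, (0 < k)%N /\
       exists B : nat -> 'M[R]_(M, N),
         (forall i, (0 < i <= k)%N -> B i \in sB) /\ nrm (prodAB A B k) < 1) :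
  exists C : R, exists lam : R, 0 < C /\ 0 < lam /\ lam < 1 /\
    forall A : nat -> 'M[R]_(N, M), (forall n, (0 < n)%N -> A n \in sA) ->
      exists B : nat -> 'M[R]_(M, N),
        (forall n, (0 < n)%N -> B n \in sB) /\
        (forall n, (0 < n)%N -> nrm (prodAB A B n) <= C * lam ^+ n).
Proof.
have [K [K0 [q [Mx [q0 [q1 [Mx0 [Hch HMx]]]]]]]] := unif hyp.
have hmul : forall X Y, nrm (X *m Y) <= nrm X * nrm Y by case: hnrm.
have hge0 := nrm_ge0 hnrm.
set c1 := nrm 1%:M.
have c10 : 0 <= c1 := hge0 _.
pose q' := (1 + q) / 2.
have q'0 : 0 < q' by rewrite /q'; lra.
have q'1 : q' < 1 by rewrite /q'; lra.
have qq' : q <= q' by rewrite /q'; lra.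
have KR : 1 <= K%:R :> R by rewrite ler1n.
pose x := (1 - q') / K%:R.
have x0 : 0 <= x by rewrite /x divr_ge0 //; lra.
have x1 : x < 1 by rewrite /x ltr_pdivrMr; lra.
pose lam := 1 - x.
have lamK : q' <= lam ^+ K.
  have := @bernoulli R x K; rewrite x0 ltW // => /(_ isT).
  have -> : K%:R * x = 1 - q' by rewrite /x mulrC -mulrA mulVf ?mulr1 //; lra.
  by rewrite /lam; lra.
have lam0 : 0 < lam by rewrite /lam; lra.
have lam1 : lam <= 1 by rewrite /lam; lra.
exists (Mx * (c1 + 1) / q'), lam; split.
  by apply: divr_gt0 => //; apply: mulr_gt0 => //; lra.
split => //; split.
  have xp : 0 < x by rewrite /x divr_gt0 //; lra.
  by rewrite /lam; lra.
have hc1 : nrm 1%:M = c1 by [].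
clearbody lam x q' c1.
move=> A hA.
pose chspec (A' : nat -> 'M[R]_(N, M)) (p : nat * (nat -> 'M[R]_(M, N))) :=
  (0 < p.1 <= K)%N /\
     (forall i, (0 < i <= p.1)%N -> p.2 i \in sB) /\ nrm (prodAB A' p.2 p.1) <= q.
pose ch (A' : nat -> 'M[R]_(N, M)) := epsilon (inhabits (0%N, fun _ => 0)) (chspec A').
have chP : forall A', (forall n, (0 < n)%N -> A' n \in sA) -> chspec A' (ch A').
  move=> A' hA'; apply: epsilon_spec.
  have [k [B hB]] := Hch A' hA'; by exists (k, B).
clearbody ch.
pose st j := iter j (stepst A ch) (0%N, fun _ => 0).
pose t j := (st j).1.
pose Bf j := (st j).2.
pose c j := ch (shiftf (t j) A).
have tS : forall j, t j.+1 = (t j + (c j).1)%N by [].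
have BfS : forall j i, Bf j.+1 i = if (i <= t j)%N then Bf j i else (c j).2 (i - t j)%N by [].
have cP : forall j, chspec (shiftf (t j) A) (c j).
  move=> j; apply: (chP (shiftf (t j) A)) => n hn; apply: hA.
  by rewrite addn_gt0 hn orbT.
have t0 : t 0%N = 0%N by [].
clearbody c Bf t st.
have cK : forall j, (0 < (c j).1 <= K)%N by move=> j; case: (cP j).
have [tle Bfin_ag locate] := comb t0 tS BfS cK.
pose Bfin i := Bf i i.
have Pj : forall j, nrm (prodAB A (Bf j) (t j)) <= c1 * q ^+ j.
  elim => [|j IH]; first by rewrite t0 /= hc1 expr0 mulr1.
  rewrite tS prodAB_split.
  have -> : prodAB (shiftf (t j) A) (shiftf (t j) (Bf j.+1)) (c j).1 =
            prodAB (shiftf (t j) A) (c j).2 (c j).1.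
    apply: prodAB_eq => i hi; split => //.
    rewrite /shiftf BfS ifF; last by apply: nat_F; case/andP: hi.
    by rewrite addKn.
  have -> : prodAB A (Bf j.+1) (t j) = prodAB A (Bf j) (t j).
    apply: prodAB_eq => i hi; split => //.
    by rewrite BfS ifT //; case/andP: hi.
  apply: le_trans (hmul _ _) _.
  rewrite exprS mulrCA; apply: ler_pM; [exact: hge0|exact: hge0| |exact: IH].
  by have [_ [_ h]] := cP j.
exists Bfin; split.
  move=> n hn; have [j hj] := locate n hn.
  have hj' : (t j < n <= t j + (c j).1)%N by rewrite -tS.
  rewrite /Bfin (@Bfin_ag j.+1); last by case/andP: hj.
  rewrite BfS ifF; last by rewrite leqNgt; case/andP: hj => ->.
  have [hc [hv _]] := cP j; apply: hv; exact: nat_sub.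
move=> n hn; have [j hj] := locate n hn.
have hj' : (t j < n <= t j + (c j).1)%N by rewrite -tS.
have -> : prodAB A Bfin n = prodAB A (Bf j.+1) n.
  apply: prodAB_eq => i hi; split => //; apply: Bfin_ag.
  apply: (@leq_trans n); [by case/andP: hi | by case/andP: hj].
rewrite {1}(_ : n = (t j + (n - t j))%N); last by rewrite subnKC //; apply: ltnW; case/andP: hj.
rewrite prodAB_split.
have -> : prodAB A (Bf j.+1) (t j) = prodAB A (Bf j) (t j).
  apply: prodAB_eq => i hi; split => //.
  by rewrite BfS ifT //; case/andP: hi.
have hb1 : nrm (prodAB (shiftf (t j) A) (shiftf (t j) (Bf j.+1)) (n - t j)) <= Mx.
  have [hc [hv _]] := cP j.
  have hs := nat_sub hj'.
  apply: HMx.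
    by apply: (@leq_trans (c j).1); [case/andP: hs | case/andP: hc].
  move=> i hi; split.
    by apply: hA; rewrite addn_gt0; case/andP: hi => ->; rewrite orbT.
  rewrite /shiftf BfS ifF; last by apply: nat_F; case/andP: hi.
  rewrite addKn; apply: hv; case/andP: hi => h1 h2; rewrite h1 /=.
  by apply: leq_trans h2 _; case/andP: hs.
have hb2 := Pj j.
have hqj : q ^+ j <= q' ^+ j by apply: lerXn2r => //; rewrite nnegrE //; lra.
have hlam : q' ^+ j.+1 <= lam ^+ n.
  apply: (@le_trans _ _ (lam ^+ (K * j.+1))).
    rewrite exprM; apply: lerXn2r => //; rewrite nnegrE; [lra|].
    apply: exprn_ge0; lra.
  apply: ler_wiXn2l => //; first lra.
  rewrite mulnC; apply: leq_trans _ (tle j.+1); by case/andP: hj.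
have hD : q' ^+ j <= lam ^+ n / q'.
  by rewrite ler_pdivlMr // -exprSr.
set D := lam ^+ n / q'.
have -> : Mx * (c1 + 1) / q' * lam ^+ n = Mx * ((c1 + 1) * D)
  by rewrite /D -!mulrA [_^-1 * _]mulrC.
apply: le_trans (hmul _ _) _.
apply: ler_pM; [exact: hge0|exact: hge0|exact: hb1|].
apply: le_trans hb2 _.
apply: ler_pM; [exact: c10 | exact: exprn_ge0 q0 | lra | exact: le_trans hqj hD].
Qed.
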